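(* Let $n\ge2$ and let $X_1,\dots,X_n$ be real-valued random variables, $X_{n:n}=\max_iX_i$, such that $$\lim_{x\to\infty}\frac{\mathbb{P}(X_i>x,X_j>x)}{\mathbb{P}(X_{n:n}>x)}=0\quad\text{for all }1\le i<j\le n.$$ (a) If for every $1\le i\le n$, $X_i\in\mathrm{GMDA}(h_i)$ with $h_i(x)\to\infty$ and $h_i(x)\sim h_1(x)$, then $X_{n:n}\in\mathrm{GMDA}(h_1)$. (b) If $X_i\in\mathcal{L}$ for every $i$ (respectively $X_i\in\mathcal{D}$ for every $i$, respectively $X_i\in\mathcal{R}_{-\alpha}$ for every $i$, for some $\alpha>0$), then $X_{n:n}\in\mathcal{L}$ (respectively $\mathcal{D}$, respectively $\mathcal{R}_{-\alpha}$).
   Context: Real-valued random variables are assumed not concentrated on $(-\infty,0]$. For a distribution function $F$, $\overline{F}=1-F$, $x_F=\sup\{x:F(x)<1\}$. $F\in\mathrm{GMDA}(h)$ means $\lim_{x\to x_F}\overline{F}(x+yh(x))/\overline{F}(x)=e^{-y}$ for all $y\in\mathbb{R}$. $F\in\mathcal{L}$ means $\overline{F}(x)>0$ for all $x\ge0$ and $\overline{F}(x+y)\sim\overline{F}(x)$ for every $y\in\mathbb{R}$. $F\in\mathcal{D}$ means $0<\liminf_{x\to\infty}\overline{F}(xy)/\overline{F}(x)\le\limsup_{x\to\infty}\overline{F}(xy)/\overline{F}(x)<\infty$ for every $y>0$. $F\in\mathcal{R}_{-\alpha}$ means $\overline{F}(x)\sim l(x)x^{-\alpha}$ for a slowly varying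 $l$ (i.e. $l(xy)\sim l(x)$ for all $y>0$). A random variable belongs to a class if its distribution function does. *)

(* Defs.v *)
From HB Require Import structures.
From mathcomp Require Import all_boot all_order all_algebra.
From mathcomp Require Import all_classical all_reals all_analysis.
Set Implicit Arguments. Unset Strict Implicit. Unset Printing Implicit Defensive.
Import Order.TTheory GRing.Theory Num.Theory.
Import numFieldNormedType.Exports.
Local Open Scope classical_set_scope.
Local Open Scope ring_scope.

Section Defs.
Variable R : realType.

Definition tail d (T : measurableType d) (P : probability T R) (X : T -> R) (x : R) : R :=
  fine (P [set w | x < X w]).

Definition jtail d (T : measurableType d) (P : probability T R) (X Y : T -> R) (x : R) : R :=
  fine (P [set w | x < X w /\ x < Y w]).

(* X_{n:n} = max_i X_i  (for n >= 1 this is the true maximum) *)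
Definition maxrv d (T : measurableType d) (n : nat) (X : 'I_n -> T -> R) (w : T) : R :=
  fine (\big[maxe/-oo%E]_(i < n) (X i w)%:E).

(* right endpoint x_F = sup {x | F(x) < 1} = sup {x | \bar F(x) > 0} *)
Definition rend (Fb : R -> R) : \bar R :=
  ereal_sup [set x%:E | x in [set x | 0 < Fb x]].

Definition at_rend (Fb : R -> R) : set_system R :=
  match rend Fb with
  | (r%:E)%E => r^'-
  | _ => +oo
  end.

Definition asymp (F : set_system R) (f g : R -> R) : Prop :=
  (fun x => f x / g x) @ F --> (1 : R).

Definition GMDA (Fb : R -> R) (h : R -> R) : Prop :=
  forall y : R, (fun x => Fb (x + y * h x) / Fb x) @ at_rend Fb --> expR (- y).

Definition long_tailed (Fb : R -> R) : Prop :=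
  (forall x, 0 <= x -> 0 < Fb x) /\
  forall y : R, asymp +oo (fun x => Fb (x + y)) Fb.

Definition dom_varying (Fb : R -> R) : Prop :=
  forall y : R, 0 < y ->
    let g := fun x => (Fb (x * y) / Fb x)%:E in
    [/\ (0 < limf_einf g (@pinfty_nbhs R))%E, (limf_einf g (@pinfty_nbhs R) <= limf_esup g (@pinfty_nbhs R))%E
      & (limf_esup g (@pinfty_nbhs R) < +oo)%E].

Definition slowly_varying (l : R -> R) : Prop :=
  forall y : R, 0 < y -> asymp +oo (fun x => l (x * y)) l.

Definition reg_varying (alpha : R) (Fb : R -> R) : Prop :=
  exists l : R -> R, slowly_varying l /\
    asymp +oo Fb (fun x => l x * x `^ (- alpha)).

End Defs.

(* Main.v *)
Require Import Defs.
From HB Require Import structures.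
From mathcomp Require Import all_boot all_order all_algebra.
From mathcomp Require Import all_classical all_reals all_analysis.
From mathcomp Require Import ring lra.
Import Order.TTheory GRing.Theory Num.Theory.
Import numFieldNormedType.Exports.
Local Open Scope classical_set_scope.
Local Open Scope ring_scope.

Section Prob.
Context (R : realType) d (T : measurableType d) (P : probability T R).
Definition mm (A : set T) : R := fine (P A).
Lemma mmE A : measurable A -> (mm A)%:E = P A.
Proof. by move=> mA; rewrite /mm fineK// fin_num_measure. Qed.
Lemma mm_ge0 A : 0 <= mm A.
Proof. exact/fine_ge0/measure_ge0. Qed.
Lemma mm_le A B : measurable A -> measurable B -> A `<=` B -> mm A <= mm B.
Proof. by move=> mA mB AB; rewrite -lee_fin !mmE//; apply: le_measure; rewrite ?inE. Qed.
Lemma mmU A B : measurable A -> measurable B ->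
  mm (A `|` B) = mm A + mm B - mm (A `&` B).
Proof.
move=> mA mB; have mI := measurableI _ _ mA mB; have mU := measurableU _ _ mA mB.
apply: EFin_inj; rewrite EFinB EFinD !mmE//.
by rewrite measureUfinl// (le_lt_trans (probability_le1 _ _)) ?ltey.
Qed.
Lemma mmU2 A B : measurable A -> measurable B -> mm (A `|` B) <= mm A + mm B.
Proof. by move=> mA mB; rewrite mmU// lerBlDr lerDl mm_ge0. Qed.

Lemma subadd (A : nat -> set T) m : (forall k, measurable (A k)) ->
  mm (\big[setU/set0]_(i < m) A i) <= \sum_(i < m) mm (A i).
Proof.
move=> mA; elim: m => [|m IH]; first by rewrite !big_ord0 /mm measure0.
rewrite !big_ord_recr /=.
have mB : measurable (\big[setU/set0]_(i < m) A i) by exact: bigsetU_measurable.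
by rewrite (le_trans (mmU2 _ _ mB (mA m)))// lerD2r.
Qed.

Lemma bonf (A : nat -> set T) m : (forall k, measurable (A k)) ->
  \sum_(i < m) mm (A i) <= mm (\big[setU/set0]_(i < m) A i)
     + \sum_(j < m) \sum_(i < j) mm (A i `&` A j).
Proof.
move=> mA; elim: m => [|m IH]; first by rewrite !big_ord0 addr0 /mm measure0.
rewrite !big_ord_recr /= mmU//; last exact: bigsetU_measurable.
have H : mm ((\big[setU/set0]_(i < m) A i) `&` A m) <= \sum_(i < m) mm (A i `&` A m).
  apply: le_trans (subadd (fun i => A i `&` A m) m _); last by move=> k; exact: measurableI.
  apply: mm_le.
  - by apply: measurableI => //; exact: bigsetU_measurable.
  - by apply: bigsetU_measurable => k _; exact: measurableI.
  rewrite -bigcup_mkord -(bigcup_mkord m (fun i => A i `&` A m)).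
  by move=> w [[k km Ak] Am]; exists k.
lra.
Qed.
End Prob.
Arguments mm {R d T} P A.
Arguments subadd {R d T} P A m.
Arguments bonf {R d T} P A m.

Section Tails.
Context (R : realType) d (T : measurableType d) (P : probability T R).

Lemma mlt (Y : {RV P >-> R}) x : measurable [set w | x < Y w].
Proof.
have -> : [set w | x < Y w] = Y @^-1` `]x, +oo[.
  by apply/seteqP; split => w /=; rewrite in_itv /= andbT.
exact: measurable_funPTI.
Qed.

Lemma tail_ge0 (Y : T -> R) x : 0 <= tail P Y x.
Proof. exact: mm_ge0. Qed.

Lemma tail_le (Y : {RV P >-> R}) x y : x <= y -> tail P Y y <= tail P Y x.
Proof.
move=> xy; apply: mm_le; try exact: mlt.
by move=> w /= /(le_lt_trans xy).
Qed.

Lemma tail_cvg0 (Y : {RV P >-> R}) : tail P Y @ +oo --> 0.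
Proof.
have -> : tail P Y = fine \o ccdf Y.
  apply/funext => x /=; rewrite /ccdf /distribution /pushforward /tail; congr (fine (P _)).
  by apply/seteqP; split => w /=; rewrite in_itv /= andbT.
exact: (fine_cvg (cvg_ccdfy0 Y)).
Qed.

Context (n : nat).
Context (X : 'I_n.+1 -> {RV P >-> R}).
Let Xf := fun k => X k : T -> R.

Lemma maxrv_gt x w : x < maxrv Xf w <-> exists i, x < X i w.
Proof.
rewrite /maxrv (bigmax_eq_arg _ ord0) //=; last by move=> i _; exact: leNye.
set j := [arg max_(_ > _ | _) _]%O.
split; first by move=> h; exists j.
move=> [i xi]; apply: (lt_le_trans xi).
have := @le_bigmax _ _ _ (-oo)%E (fun i => (Xf i w)%:E) i.
by rewrite (bigmax_eq_arg _ ord0) // => k _; exact: leNye.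
Qed.

Definition Aset x k := [set w | x < X (inord k) w].

Lemma Aset_m x k : measurable (Aset x k).
Proof. exact: mlt. Qed.

Lemma maxset x : [set w | x < maxrv Xf w] = \big[setU/set0]_(k < n.+1) Aset x k.
Proof.
rewrite -bigcup_mkord; apply/seteqP; split => w /=.
  by move/maxrv_gt => [i xi]; exists i => //=; rewrite /Aset /= inord_val.
by move=> [k /= kn]; rewrite /Aset /= => h; apply/maxrv_gt; exists (inord k).
Qed.

Definition Ssum x := \sum_(i < n.+1) tail P (X i) x.
Definition Jsum x := \sum_(j < n.+1) \sum_(i < j) jtail P (X (inord i)) (X (inord j)) x.

Lemma tail_le_max i x : tail P (X i) x <= tail P (maxrv Xf) x.
Proof.
apply: mm_le; first exact: mlt.
  by rewrite maxset; apply: bigsetU_measurable => k _; exact: Aset_m.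
by move=> w /= h; apply/maxrv_gt; exists i.
Qed.

Lemma max_le_S x : tail P (maxrv Xf) x <= Ssum x.
Proof.
rewrite /tail maxset -/(mm P _).
apply: le_trans (subadd P _ _ (Aset_m x)) _.
by rewrite le_eqVlt; apply/orP; left; apply/eqP; apply: eq_bigr => i _; rewrite /Aset inord_val.
Qed.

Lemma S_le x : Ssum x <= tail P (maxrv Xf) x + Jsum x.
Proof.
have := bonf P (Aset x) n.+1 (Aset_m x).
rewrite /tail maxset -/(mm P _) /Ssum /Jsum.
have -> : \sum_(i < n.+1) mm P (Aset x i) = \sum_(i < n.+1) fine (P [set w | x < X i w]).
  by apply: eq_bigr => i _; rewrite /Aset inord_val.
done.
Qed.

Lemma Jsum_ge0 x : 0 <= Jsum x.
Proof. by apply: sumr_ge0 => j _; apply: sumr_ge0 => i _; exact: mm_ge0. Qed.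
End Tails.

Section Ana.
Context (R : realType).

Lemma sum_cvg0 {U} (F : set_system U) {FF : Filter F} m (f : nat -> U -> R) :
  (forall i, (i < m)%N -> f i @ F --> 0) -> (fun x => \sum_(i < m) f i x) @ F --> 0.
Proof.
elim: m => [|m IH] H.
  by under eq_fun do rewrite big_ord0; exact: cvg_cst.
under eq_fun do rewrite big_ord_recr /=.
suff H0 : (fun x => \sum_(i < m) f i x + f m x) @ F --> (0 + 0 : R) by rewrite addr0 in H0.
exact: (cvgD (IH (fun i im => H i (ltnW im))) (H m (ltnSn m))).
Qed.

Lemma near_comp (phi : R -> R) (Q : R -> Prop) :
  phi @ +oo --> +oo -> (\forall y \near +oo, Q y) -> \forall x \near +oo, Q (phi x).
Proof. by move=> h HQ; exact: h _ HQ. Qed.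

Lemma ratio_one (Fm S J : R -> R) :
  (forall x, 0 <= Fm x) -> (forall x, Fm x <= S x) -> (forall x, S x <= Fm x + J x) ->
  (fun x => J x / Fm x) @ +oo --> 0 -> (\forall x \near +oo, 0 < Fm x) ->
  (fun x => S x / Fm x) @ +oo --> (1 : R).
Proof.
move=> F0 FS SJ HJ Fpos; apply/cvgrPdist_le => e e0.
move/cvgrPdist_le : HJ => /(_ e e0) HJ.
near=> x.
have fx : 0 < Fm x by near: x.
have jx : `|0 - J x / Fm x| <= e by near: x.
rewrite sub0r normrN in jx.
have h1 : 1 <= S x / Fm x by rewrite ler_pdivlMr // mul1r.
have h2 : S x / Fm x <= 1 + J x / Fm x.
  by rewrite ler_pdivrMr // mulrDl mul1r divfK ?gt_eqF.
rewrite ler_norml; apply/andP; split.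
  have := ler_norm (J x / Fm x); lra.
lra.
Unshelve. all: by end_near.
Qed.

Lemma sum_ratio (I : finType) (i0 : I) (a b : I -> R -> R) (c : R) :
  (forall i, \forall x \near +oo, 0 < b i x) ->
  (forall i, (fun x => a i x / b i x) @ +oo --> c) ->
  (fun x => (\sum_i a i x) / (\sum_i b i x)) @ +oo --> c.
Proof.
move=> bpos H; apply/cvgrPdist_le => e e0.
have Hb := filter_forall _ bpos.
have He : forall i, \forall x \near +oo, `|c - a i (x : R) / b i x| <= e.
  by move=> i; move/cvgrPdist_le : (H i) => /(_ e e0).
have He' := filter_forall _ He.
near=> x.
have bx : forall i, 0 < b i x by near: x; apply: Hb.
have ex : forall i, `|c - a i x / b i x| <= e by near: x; apply: He'.
have Sb : 0 < \sum_i b i x.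
  by rewrite (bigD1 i0) //= ltr_pwDl ?bx // sumr_ge0 // => i _; exact: ltW.
have -> : c - (\sum_i a i x) / (\sum_i b i x) = (\sum_i (c * b i x - a i x)) / (\sum_i b i x).
  by rewrite sumrB -mulr_sumr mulrBl mulfK ?gt_eqF.
rewrite normrM (ger0_norm (ltW (eq_ind_r is_true Sb (invr_gt0 _)))) ler_pdivrMr //.
apply: le_trans (ler_norm_sum _ _ _) _.
rewrite mulr_sumr; apply: ler_sum => i _.
have -> : c * b i x - a i x = (c - a i x / b i x) * b i x.
  by rewrite mulrBl divfK ?gt_eqF ?bx.
by rewrite normrM (gtr0_norm (bx i)); apply: ler_wpM2r; [exact: ltW | exact: ex].
Unshelve. all: by end_near.
Qed.

Lemma transfer (Fm S phi : R -> R) (c : R) :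
  (forall x, Fm x <= S x) ->
  (fun x => S x / Fm x) @ +oo --> (1 : R) -> phi @ +oo --> +oo ->
  (\forall x \near +oo, 0 < Fm x) ->
  (fun x => S (phi x) / S x) @ +oo --> c ->
  (fun x => Fm (phi x) / Fm x) @ +oo --> c.
Proof.
move=> FS hr hphi Fpos hS.
set r := fun x => S x / Fm x.
have hrphi : (fun x => r (phi x)) @ +oo --> (1 : R).
  by move=> A /hr /hphi.
have Fpos' := near_comp phi (fun y => 0 < Fm y) hphi Fpos.
have H2 : (fun x => r x * (r (phi x))^-1) @ +oo --> (1 * 1^-1 : R).
  apply: cvgM => //; exact: (cvgV (oner_neq0 R) hrphi).
rewrite invr1 mulr1 in H2.
have H3 := cvgM hS H2; rewrite mulr1 in H3.
have E : {near +oo, (fun x => S (phi x) / S x * (r x * (r (phi x))^-1)) =1 (fun x => Fm (phi x) / Fm x)}.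
  near=> x.
  have f1 : 0 < Fm x by near: x.
  have f2 : 0 < Fm (phi x) by near: x.
  have s1 : 0 < S x by exact: lt_le_trans f1 (FS x).
  have s2 : 0 < S (phi x) by exact: lt_le_trans f2 (FS _).
  rewrite /r /=; field.
  by rewrite !gt_eqF.
exact: (cvg_trans (near_eq_cvg E) (H3 _)).
Unshelve. all: by end_near.
Qed.
End Ana.

Section Rend.
Context (R : realType).

Lemma rend_ub (F : R -> R) x : 0 < F x -> (x%:E <= rend F)%E.
Proof. by move=> hx; apply: ereal_sup_ubound; exists x. Qed.

Lemma rend_pinfty (F : R -> R) : (forall x, 0 < F x) -> rend F = +oo%E.
Proof.
move=> Fp; apply/eqP; rewrite eq_le leey /= -ereal_sup_real.
by apply: ereal_sup_le => _ [x _ <-]; exists x => //; exact: Fp.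
Qed.

Lemma at_rend_pinfty (F : R -> R) : (forall x, 0 < F x) -> at_rend F = +oo.
Proof. by move=> Fp; rewrite /at_rend rend_pinfty. Qed.

Lemma gmda_pos (F h : R -> R) : (forall x y, x <= y -> F y <= F x) ->
  (forall x, 0 <= F x) -> 0 < F 0 -> GMDA F h -> h @ at_rend F --> +oo ->
  forall x, 0 < F x.
Proof.
move=> Fmono F0 Fp0 Hg Hh z.
have [//|Fz] := ltP 0 (F z).
have ub : (rend F <= z%:E)%E.
  apply: ge_ereal_sup => _ [x hx <-]; rewrite lee_fin leNgt; apply/negP => zx.
  have := Fmono z x (ltW zx); move: hx Fz => /= hx Fz; lra.
have lb : (0%:E <= rend F)%E by exact: rend_ub.
have fin : rend F \is a fin_num by rewrite ge0_fin_numE // (le_lt_trans ub) ?ltry.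
set r := fine (rend F).
have rE : rend F = r%:E by rewrite /r fineK.
have zero : forall t, r < t -> F t = 0.
  move=> t rt; apply/eqP; rewrite eq_le F0 andbT leNgt; apply/negP => Ft.
  have := @rend_ub F t Ft; rewrite rE lee_fin; lra.
have := Hg 1; rewrite /at_rend rE => H1.
move: Hh; rewrite /at_rend rE => Hh.
have Hh1 : \forall x \near r^'-, 1 < h x.
  exact: (Hh _ (nbhs_pinfty_gt (num_real (1:R)))).
have H0 : (fun x => F (x + 1 * h x) / F x) @ r^'- --> (0 : R).
  have E : {near r^'-, (fun _ => 0 : R) =1 (fun x => F (x + 1 * h x) / F x)}.
    near=> x.
  have xr : r - 1 < x by near: x; apply: nbhs_left_gt; lra.
  have hx : 1 < h x by near: x.
  by rewrite zero ?mul0r //; lra.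
  exact: (cvg_trans (near_eq_cvg E) (cvg_cst _)).
have E : expR (- (1:R)) = 0 by apply: (cvg_unique _ H1 H0).
by have := expR_gt0 (- (1:R)); rewrite E ltxx.
Unshelve. all: by end_near.
Qed.
End Rend.

Section Unif.
Context (R : realType).

Lemma expR_delta (y e : R) : 0 < e -> exists2 d : R, 0 < d &
  `|expR (- y) - expR (- (y + d))| <= e /\ `|expR (- y) - expR (- (y - d))| <= e.
Proof.
move=> e0.
have := @continuous_expR R (- y).
move/cvgrPdist_le => /(_ e e0) /nbhs_ballP [d d0 Hd].
exists (d / 2); first by rewrite divr_gt0.
have d2 : 0 < d / 2 by rewrite divr_gt0.
have d2' : d / 2 < d by rewrite ltr_pdivrMr // ltr_pMr // ltr1n.
split; apply: Hd; rewrite /ball /=.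
  have -> : - y - - (y + d / 2) = d / 2 by ring.
  by rewrite gtr0_norm.
have -> : - y - - (y - d / 2) = - (d / 2) by ring.
by rewrite normrN gtr0_norm.
Qed.

Lemma gmda_unif (F h h1 : R -> R) (y : R) :
  (forall x z, x <= z -> F z <= F x) -> (forall x, 0 < F x) ->
  (forall y, (fun x => F (x + y * h x) / F x) @ +oo --> expR (- y)) ->
  (\forall x \near +oo, 0 < h x) ->
  (fun x => h1 x / h x) @ +oo --> (1 : R) ->
  (fun x => F (x + y * h1 x) / F x) @ +oo --> expR (- y).
Proof.
move=> Fmono Fpos HG hpos hh.
apply/cvgrPdist_le => e e0.
have e20 : 0 < e / 2 by rewrite divr_gt0.
have [d d0 [Hd1 Hd2]] := expR_delta y (e / 2) e20.
have eta0 : 0 < d / (`|y| + 1) by rewrite divr_gt0 // ltr_wpDl.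
move/cvgrPdist_le : (HG (y + d)) => /(_ _ e20) G1.
move/cvgrPdist_le : (HG (y - d)) => /(_ _ e20) G2.
move/cvgrPdist_le : hh => /(_ _ eta0) H3.
near=> x.
have hx : 0 < h x by near: x.
have g1 : `|expR (- (y + d)) - F (x + (y + d) * h x) / F x| <= e / 2 by near: x.
have g2 : `|expR (- (y - d)) - F (x + (y - d) * h x) / F x| <= e / 2 by near: x.
have g3 : `|1 - h1 x / h x| <= d / (`|y| + 1) by near: x.
set q := h1 x / h x in g3.
have yq : `|y * q - y| <= d.
  have -> : y * q - y = y * (q - 1) by ring.
  rewrite normrM distrC; apply: le_trans (ler_wpM2l (normr_ge0 y) g3) _.
  rewrite mulrA ler_pdivrMr ?ltr_wpDl //; nra.
have E : x + y * h1 x = x + (y * q) * h x by rewrite /q -mulrA divfK ?gt_eqF.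
rewrite E.
move: yq; rewrite ler_norml => /andP [yq1 yq2].
have L1 : F (x + (y + d) * h x) <= F (x + y * q * h x).
  apply: Fmono; rewrite lerD2l ler_pM2r //; lra.
have L2 : F (x + y * q * h x) <= F (x + (y - d) * h x).
  apply: Fmono; rewrite lerD2l ler_pM2r //; lra.
have Fx := Fpos x.
have R1 : F (x + (y + d) * h x) / F x <= F (x + y * q * h x) / F x.
  by rewrite ler_pM2r ?invr_gt0.
have R2 : F (x + y * q * h x) / F x <= F (x + (y - d) * h x) / F x.
  by rewrite ler_pM2r ?invr_gt0.
move: g1 g2 Hd1 Hd2; rewrite !ler_norml => /andP [a1 a2] /andP [b1 b2] /andP [c1 c2] /andP [f1 f2].
apply/andP; split; lra.
Unshelve. all: by end_near.
Qed.

Lemma phi_inf (F h : R -> R) (y c : R) :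
  (forall x z, x <= z -> F z <= F x) -> (forall x, 0 < F x) ->
  F @ +oo --> (0 : R) ->
  (fun x => F (x + y * h x) / F x) @ +oo --> c ->
  (fun x => x + y * h x) @ +oo --> +oo.
Proof.
move=> Fmono Fpos F0 Hc; apply/cvgryPgt => M.
set C := `|c| + 1.
have C0 : 0 < C by rewrite ltr_wpDl.
have eps0 : 0 < F M / C by rewrite divr_gt0.
move/cvgrPdist_lt : F0 => /(_ _ eps0) F0.
move/cvgrPdist_le : Hc => /(_ _ ltr01) Hc.
near=> x.
have a1 : `|0 - F x| < F M / C by near: x.
have a2 : `|c - F (x + y * h x) / F x| <= 1 by near: x.
rewrite sub0r normrN gtr0_norm ?Fpos // in a1.
rewrite ltNge; apply/negP => le.
have b1 : F M <= F (x + y * h x) by exact: Fmono.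
have Fx := Fpos x.
have b2 : F (x + y * h x) / F x <= C.
  move: a2; rewrite ler_norml => /andP [u1 u2].
  have := ler_norm c; rewrite /C; lra.
have b3 : F M <= C * F x.
  by apply: le_trans b1 _; rewrite -ler_pdivrMr.
move: a1; rewrite ltr_pdivlMr // mulrC; lra.
Unshelve. all: by end_near.
Qed.

Lemma shift_inf (y : R) : (fun x : R => x + y) @ +oo --> +oo.
Proof.
apply/cvgryPgt => M; near=> x.
have : M - y < x by near: x; apply: nbhs_pinfty_gt; exact: num_real.
lra.
Unshelve. all: by end_near.
Qed.

Lemma scale_inf (y : R) : 0 < y -> (fun x : R => x * y) @ +oo --> +oo.
Proof.
move=> y0; apply/cvgryPgt => M; near=> x.
have : M / y < x by near: x; apply: nbhs_pinfty_gt; exact: num_real.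
by rewrite ltr_pdivrMr.
Unshelve. all: by end_near.
Qed.
End Unif.

Section Lim.
Context (R : realType) (F : set_system R) {PF : ProperFilter F}.
Local Open Scope ereal_scope.

Lemma einf_ge (g : R -> R) (c : R) : F [set x | (c <= g x)%R] ->
  c%:E <= limf_einf (fun x => (g x)%:E) F.
Proof.
move=> HV; rewrite limf_einfE; apply: le_ereal_sup_tmp.
exists (ereal_inf ((fun x => (g x)%:E) @` [set x | (c <= g x)%R])); first by exists [set x | (c <= g x)%R].
by apply: le_ereal_inf_tmp => _ [x /= hx <-]; rewrite lee_fin.
Qed.

Lemma esup_le (g : R -> R) (C : R) : F [set x | (g x <= C)%R] ->
  limf_esup (fun x => (g x)%:E) F <= C%:E.
Proof.
move=> HV; rewrite limf_esupE; apply: ge_ereal_inf.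
exists (ereal_sup ((fun x => (g x)%:E) @` [set x | (g x <= C)%R])); first by exists [set x | (g x <= C)%R].
by apply: ge_ereal_sup => _ [x /= hx <-]; rewrite lee_fin.
Qed.

Lemma einf_pos (g : R -> R) : 0 < limf_einf (fun x => (g x)%:E) F ->
  exists2 c : R, (0 < c)%R & F [set x | (c <= g x)%R].
Proof.
rewrite limf_einfE => /ereal_sup_gt [_ [V FV <-]] Vpos.
have [v Vv] := filter_ex FV.
have ub : ereal_inf ((fun x => (g x)%:E) @` V) <= (g v)%:E by apply: ereal_inf_lbound; exists v.
have fin : ereal_inf ((fun x => (g x)%:E) @` V) \is a fin_num.
  by rewrite ge0_fin_numE ?(le_lt_trans ub) ?ltry // ltW.
exists (fine (ereal_inf ((fun x => (g x)%:E) @` V))).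
  by rewrite -lte_fin fineK.
apply: filterS FV => x Vx /=; rewrite -lee_fin fineK //.
by apply: ereal_inf_lbound; exists x.
Qed.

Lemma esup_fin (g : R -> R) : limf_esup (fun x => (g x)%:E) F < +oo ->
  exists C : R, F [set x | (g x <= C)%R].
Proof.
rewrite limf_esupE => /ereal_inf_lt [_ [V FV <-]] Vfin.
have [v Vv] := filter_ex FV.
have lb : (g v)%:E <= ereal_sup ((fun x => (g x)%:E) @` V) by apply: ereal_sup_ubound; exists v.
have fin : ereal_sup ((fun x => (g x)%:E) @` V) \is a fin_num.
  rewrite fin_numE; apply/andP; split; last by rewrite lt_eqF.
  by apply/eqP => E; rewrite E leeNy_eq in lb.
exists (fine (ereal_sup ((fun x => (g x)%:E) @` V))).
apply: filterS FV => x Vx /=; rewrite -lee_fin fineK //.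
by apply: ereal_sup_ubound; exists x.
Qed.

Lemma einf_le_esup (g : R -> R) :
  limf_einf (fun x => (g x)%:E) F <= limf_esup (fun x => (g x)%:E) F.
Proof.
rewrite limf_einfE limf_esupE; apply: ge_ereal_sup => _ [V FV <-].
apply: le_ereal_inf_tmp => _ [W FW <-].
have [z [Vz Wz]] := filter_ex (filterI FV FW).
apply: (@le_trans _ _ (g z)%:E).
  by apply: ereal_inf_lbound; exists z.
by apply: ereal_sup_ubound; exists z.
Qed.
End Lim.


Theorem lemma4p1 (R : realType) (d : measure_display) (T : measurableType d)
  (P : probability T R) (n : nat) (X : 'I_n -> {RV P >-> R}) :
  (2 <= n)%N ->
  (forall i, 0 < tail P (X i) 0) ->
  (forall i j : 'I_n, (i < j)%N ->
     (fun x => jtail P (X i) (X j) x / tail P (maxrv (fun k => X k : T -> R)) x)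
       @ +oo --> (0 : R)) ->
  let Fmax := tail P (maxrv (fun k => X k : T -> R)) in
  (forall (h : 'I_n -> R -> R) (i1 : 'I_n), nat_of_ord i1 = 0%N ->
     (forall i, GMDA (tail P (X i)) (h i)) ->
     (forall i, h i @ at_rend (tail P (X i)) --> +oo) ->
     (forall i, asymp (at_rend (tail P (X i))) (h i) (h i1)) ->
     GMDA Fmax (h i1)) /\
  ((forall i, long_tailed (tail P (X i))) -> long_tailed Fmax) /\
  ((forall i, dom_varying (tail P (X i))) -> dom_varying Fmax) /\
  (forall alpha : R, 0 < alpha ->
     (forall i, reg_varying alpha (tail P (X i))) -> reg_varying alpha Fmax).
Proof.
move: X; case: n => [//|n] X hn Hpos Hj Fmax.
have Fmono : forall i x z, x <= z -> tail P (X i) z <= tail P (X i) x.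
  by move=> i x z; exact: tail_le.
have F0 : forall i x, 0 <= tail P (X i) x by move=> i x; exact: tail_ge0.
have FmS : forall x, Fmax x <= Ssum R d T P n X x by move=> x; exact: max_le_S.
have FiFm : forall i x, tail P (X i) x <= Fmax x by move=> i x; exact: tail_le_max.
have Fm0 : forall x, 0 <= Fmax x by move=> x; exact: tail_ge0.
have HJ : (fun x => Jsum R d T P n X x / Fmax x) @ +oo --> (0 : R).
  have -> : (fun x => Jsum R d T P n X x / Fmax x) = (fun x => \sum_(j < n.+1) \sum_(i < j)
      jtail P (X (inord i)) (X (inord j)) x / Fmax x).
    apply/funext => x; rewrite /Jsum mulr_suml; apply: eq_bigr => j _.
    by rewrite mulr_suml.
  apply: (@sum_cvg0 R R _ _ n.+1 (fun j x => \sum_(i < j) jtail P (X (inord i)) (X (inord j)) x / Fmax x)) => j jn.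
  apply: (@sum_cvg0 R R _ _ j (fun i x => jtail P (X (inord i)) (X (inord j)) x / Fmax x)) => i ij.
  apply: Hj; rewrite !inordK //; exact: ltn_trans ij jn.
have Hone : (\forall x \near +oo, 0 < Fmax x) ->
    (fun x => Ssum R d T P n X x / Fmax x) @ +oo --> (1 : R).
  move=> Fp; apply: (@ratio_one R Fmax (Ssum R d T P n X) (Jsum R d T P n X) Fm0 FmS _ HJ Fp) => x; exact: S_le.
split; last split; last split.
- move=> h i1 i10 Hg Hh Has.
  have Fpos : forall i x, 0 < tail P (X i) x.
    by move=> i; exact: (@gmda_pos R (tail P (X i)) (h i) (Fmono i) (F0 i) (Hpos i) (Hg i) (Hh i)).
  have rendi : forall i, at_rend (tail P (X i)) = +oo.
    by move=> i; exact: (@at_rend_pinfty R _ (Fpos i)).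
  have Fmpos : forall x, 0 < Fmax x by move=> x; apply: lt_le_trans (FiFm ord0 x).
  have Fmp : \forall x \near +oo, 0 < Fmax x by near=> x.
  have Hg' : forall i y, (fun x => tail P (X i) (x + y * h i x) / tail P (X i) x) @ +oo --> expR (- y).
    by move=> i y; move: (Hg i y); rewrite rendi.
  have Hh' : forall i, h i @ +oo --> +oo by move=> i; move: (Hh i); rewrite rendi.
  have Has' : forall i, (fun x => h i x / h i1 x) @ +oo --> (1 : R).
    by move=> i; move: (Has i); rewrite /asymp rendi.
  rewrite /GMDA (@at_rend_pinfty R _ Fmpos) => y.
  apply: (@transfer R Fmax (Ssum R d T P n X) (fun x => x + y * h i1 x) _ FmS (Hone Fmp) _ Fmp).
    exact: (@phi_inf R (tail P (X i1)) (h i1) y (expR (- y)) (Fmono i1) (Fpos i1) (@tail_cvg0 R d T P (X i1)) (Hg' i1 y)).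
  apply: (@sum_ratio R _ ord0 (fun i x => tail P (X i) (x + y * h i1 x)) (fun i x => tail P (X i) x) _).
    by move=> i; near=> x; apply: Fpos.
  move=> i.
  have hpos : \forall x \near +oo, 0 < h i x.
    exact: (Hh' i _ (nbhs_pinfty_gt (num_real (0:R)))).
  have hr : (fun x => h i1 x / h i x) @ +oo --> (1 : R).
    have FFo : Filter (pinfty_nbhs R) by exact: proper_pinfty_nbhs.
    have := @cvgV _ _ _ FFo _ _ (oner_neq0 R) (Has' i).
    rewrite invr1; apply: cvg_trans; apply: near_eq_cvg; near=> x.
    by rewrite /= invf_div.
  exact: (@gmda_unif R (tail P (X i)) (h i) (h i1) y (Fmono i) (Fpos i) (Hg' i) hpos hr).
- move=> Hl.
  have Fip : forall i, \forall x \near +oo, 0 < tail P (X i) x.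
    move=> i; near=> x; apply: (Hl i).1; apply: ltW; near: x.
    by apply: nbhs_pinfty_gt; exact: num_real.
  have Fmp : \forall x \near +oo, 0 < Fmax x.
    by near=> x; apply: lt_le_trans (FiFm ord0 x); near: x; exact: Fip.
  split.
    by move=> x x0; apply: lt_le_trans (FiFm ord0 x); exact: (Hl ord0).1 x x0.
  move=> y; rewrite /asymp.
  apply: (@transfer R Fmax (Ssum R d T P n X) (fun x => x + y) 1 FmS (Hone Fmp) (@shift_inf R y) Fmp).
  exact: (@sum_ratio R _ ord0 (fun i x => tail P (X i) (x + y)) (fun i x => tail P (X i) x) 1 Fip (fun i => (Hl i).2 y)).
- move=> Hd y y0 /=.
  have Fip : forall i, \forall x \near +oo, 0 < tail P (X i) x.
    move=> i; have := Hd i 1 ltr01; rewrite /= => -[H1 _ _].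
    have [c c0 Hc] := @einf_pos R _ _ (fun x => tail P (X i) (x * 1) / tail P (X i) x) H1.
    apply: filterS Hc => x /= hx.
    rewrite lt_neqAle F0 andbT; apply/eqP => E.
    by move: hx; rewrite -E invr0 mulr0; lra.
  have Hlow : forall i, exists c, 0 < c /\ (\forall x \near +oo, c <= tail P (X i) (x * y) / tail P (X i) x).
    move=> i; have := Hd i y y0; rewrite /= => -[H1 _ _].
    have [c c0 Hc] := @einf_pos R _ _ (fun x => tail P (X i) (x * y) / tail P (X i) x) H1.
    by exists c.
  have Hup : forall i, exists C, (\forall x \near +oo, tail P (X i) (x * y) / tail P (X i) x <= C).
    move=> i; have := Hd i y y0; rewrite /= => -[_ _ H3].
    have [C HC] := @esup_fin R _ _ (fun x => tail P (X i) (x * y) / tail P (X i) x) H3.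
    by exists C.
  have [cf Hcf] := boolp.choice Hlow.
  have [Cf HCf] := boolp.choice Hup.
  have cf0 : forall i, 0 < cf i by move=> i; case: (Hcf i).
  set s := \sum_i (cf i)^-1.
  have s0 : 0 < s.
    rewrite /s (bigD1 ord0) //= ltr_pwDl ?invr_gt0 ?cf0 // sumr_ge0 // => i _.
    by rewrite invr_ge0 ltW.
  set C := \sum_i `|Cf i|.
  have E1 := filter_forall _ Fip.
  have E2 := filter_forall _ (fun i => (Hcf i).2).
  have E3 := filter_forall _ HCf.
  have Hlo : \forall x \near +oo, s^-1 <= Fmax (x * y) / Fmax x.
    near=> x.
    have fp : forall i, 0 < tail P (X i) x by near: x; apply: E1.
    have rl : forall i, cf i <= tail P (X i) (x * y) / tail P (X i) x by near: x; apply: E2.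
    have fmx : 0 < Fmax x by apply: lt_le_trans (FiFm ord0 x).
    rewrite ler_pdivlMr // ler_pdivrMl //.
    apply: le_trans (FmS x) _; rewrite /Ssum /s mulr_suml.
    apply: ler_sum => i _.
    have := rl i; rewrite ler_pdivlMr ?fp // => h1.
    have ci : 0 <= (cf i)^-1 by rewrite invr_ge0 ltW ?cf0.
    apply: (@le_trans _ _ ((cf i)^-1 * tail P (X i) (x * y))).
      have -> : tail P (X i) x = (cf i)^-1 * (cf i * tail P (X i) x).
        by rewrite mulrA mulVf ?gt_eqF ?cf0 // mul1r.
      exact: ler_wpM2l.
    exact: ler_wpM2l.
  have Hhi : \forall x \near +oo, Fmax (x * y) / Fmax x <= C.
    near=> x.
    have fp : forall i, 0 < tail P (X i) x by near: x; apply: E1.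
    have ru : forall i, tail P (X i) (x * y) / tail P (X i) x <= Cf i by near: x; apply: E3.
    have fmx : 0 < Fmax x by apply: lt_le_trans (FiFm ord0 x).
    rewrite ler_pdivrMr // /C mulr_suml.
    apply: le_trans (FmS _) _; rewrite /Ssum.
    apply: ler_sum => i _.
    have := ru i; rewrite ler_pdivrMr ?fp // => h1.
    apply: le_trans h1 _.
    apply: (@le_trans _ _ (`|Cf i| * tail P (X i) x)).
      by rewrite ler_wpM2r ?F0 // ler_norm.
    by rewrite ler_wpM2l ?normr_ge0.
  split.
  + apply: (@lt_le_trans _ _ (s^-1)%:E); first by rewrite lte_fin invr_gt0.
    exact: (@einf_ge R _ (fun x => Fmax (x * y) / Fmax x) s^-1 Hlo).
  + exact: einf_le_esup.
  + apply: (le_lt_trans (@esup_le R _ (fun x => Fmax (x * y) / Fmax x) C Hhi)).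
    exact: ltry.
- move=> alpha a0 Hr.
  have nz : forall f g : R -> R, (fun x => f x / g x) @ +oo --> (1 : R) ->
      \forall x \near +oo, f x != 0 /\ g x != 0.
    move=> f g /cvgrPdist_lt /(_ _ ltr01) H; near=> x.
    have hx : `|1 - f x / g x| < 1 by near: x.
    split; apply/eqP => E; move: hx; rewrite E ?mul0r ?invr0 ?mulr0 subr0 normr1 ltxx //.
  have [lf Hlf] := boolp.choice Hr.
  have Fip : forall i, \forall x \near +oo, 0 < tail P (X i) x.
    move=> i; have := nz _ _ (Hlf i).2; apply: filterS => x [h1 _].
    by rewrite lt_neqAle eq_sym h1 F0.
  have Fmp : \forall x \near +oo, 0 < Fmax x.
    by near=> x; apply: lt_le_trans (FiFm ord0 x); near: x; exact: Fip.
  have xpos : \forall x \near +oo, (0:R) < x.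
    by apply: nbhs_pinfty_gt; exact: num_real.
  have ya : forall y : R, 0 < y -> (fun x => Fmax (x * y) / Fmax x) @ +oo --> y `^ (- alpha).
    move=> y y0.
    apply: (@transfer R Fmax (Ssum R d T P n X) (fun x => x * y) _ FmS (Hone Fmp) (@scale_inf R y y0) Fmp).
    apply: (@sum_ratio R _ ord0 (fun i x => tail P (X i) (x * y)) (fun i x => tail P (X i) x) _ Fip) => i.
    set l := lf i; have [Hl Ha] := Hlf i; rewrite -/l in Hl Ha.
    set u := fun x => tail P (X i) x / (l x * x `^ (- alpha)).
    have hu : u @ +oo --> (1 : R) by exact: Ha.
    have hu' : (fun x => u (x * y)) @ +oo --> (1 : R).
      by move=> A /hu /(@scale_inf R y y0).
    have hl := Hl y y0; rewrite /asymp in hl.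
    have FFo : Filter (pinfty_nbhs R) by exact: proper_pinfty_nbhs.
    have H1 := @cvgM _ _ _ FFo _ _ _ _ hu' hl.
    have H2 := @cvgM _ _ _ FFo _ _ _ _ H1 (@cvg_cst _ (y `^ (- alpha)) _ _ FFo).
    have H3 := @cvgM _ _ _ FFo _ _ _ _ H2 (@cvgV _ _ _ FFo _ _ (oner_neq0 R) hu).
    rewrite !mul1r invr1 mulr1 in H3.
    have E : {near +oo, (fun x => u (x * y) * (l (x * y) / l x) * y `^ (- alpha) * (u x)^-1) =1
        (fun x => tail P (X i) (x * y) / tail P (X i) x)}.
      have N1 := nz _ _ Ha.
      have N2 := @near_comp R (fun x => x * y) _ (@scale_inf R y y0) N1.
      have N3 := @near_comp R (fun x => x * y) _ (@scale_inf R y y0) (Fip i).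
      near=> x.
      have x0 : 0 < x by near: x.
      have [_ n1] : tail P (X i) x != 0 /\ l x * x `^ (- alpha) != 0 by near: x.
      have [_ n2] : tail P (X i) (x * y) != 0 /\ l (x * y) * (x * y) `^ (- alpha) != 0 by near: x.
      have f1 : 0 < tail P (X i) x by near: x; exact: (Fip i).
      have f2 : 0 < tail P (X i) (x * y) by near: x.
      move: n1 n2; rewrite !mulf_eq0 !negb_or => /andP [l1 p1] /andP [l2 p2].
      have py : y `^ (- alpha) != 0 by rewrite gt_eqF // powR_gt0.
      rewrite /u /= powRM ?ltW // in p2 *.
      field.
      by rewrite (gt_eqF f1) p1 l1 py l2.
    exact: (cvg_trans (near_eq_cvg E) H3).
  exists (fun x => Fmax x * x `^ alpha); split.
    move=> y y0; rewrite /asymp.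
    have FFo : Filter (pinfty_nbhs R) by exact: proper_pinfty_nbhs.
    have H := @cvgM _ _ _ FFo _ _ _ _ (ya y y0) (@cvg_cst _ (y `^ alpha) _ _ FFo).
    rewrite powRN mulVf ?gt_eqF ?powR_gt0 // in H.
    have E : {near +oo, (fun x => Fmax (x * y) / Fmax x * y `^ alpha) =1
        (fun x => Fmax (x * y) * (x * y) `^ alpha / (Fmax x * x `^ alpha))}.
      near=> x.
      have x0 : 0 < x by near: x.
      have f1 : 0 < Fmax x by near: x.
      rewrite /= powRM ?ltW //.
      field.
      by rewrite !gt_eqF ?f1 ?powR_gt0.
    exact: (cvg_trans (near_eq_cvg E) H).
  rewrite /asymp.
  have E : {near +oo, (fun x => (1 : R)) =1 (fun x => Fmax x / (Fmax x * x `^ alpha * x `^ (- alpha)))}.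
    near=> x.
    have x0 : 0 < x by near: x.
    have f1 : 0 < Fmax x by near: x.
    rewrite /= powRN -mulrA mulfV ?gt_eqF ?powR_gt0 // mulr1 divff //.
    by rewrite gt_eqF.
  exact: (cvg_trans (near_eq_cvg E) (cvg_cst _)).
Unshelve. all: by end_near.
Qed.
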